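(* Let $\mathcal{E}_{tr}$ be a finite set of training environments, let $\mathcal{H}_\Phi$ be a class of representations $\Phi:\mathcal{X}\to\mathcal{Z}$ and let $\mathcal{H}_w$ be a class of classifiers $w:\mathcal{Z}\to\mathbb{R}^k$. Suppose $\mathcal{H}_w$ satisfies affine closure: for all $w_1,w_2\in\mathcal{H}_w$ and $c\in\mathbb{R}$, the pointwise sum $w_1+w_2$ and the pointwise scalar multiple $cw$ belong to $\mathcal{H}_w$. Then $\tilde{\mathcal{S}}^{\mathsf{IV}}=\tilde{\mathcal{S}}^{\mathsf{EIRM}}$.
   Context: Setting: For each environment $e\in\mathcal{E}_{tr}$ there is a joint distribution of a random pair $(X^e,Y^e)$ with $X^e\in\mathcal{X}\subseteq\mathbb{R}^n$, $Y^e\in\mathcal{Y}\subseteq\mathbb{R}^k$. Given a loss $\ell$, the risk of a predictor $f:\mathcal{X}\to\mathbb{R}^k$ in environment $e$ is $R^e(f)=\mathbb{E}[\ell(f(X^e),Y^e)]$. Representations $\Phi\in\mathcal{H}_\Phi$ map $\mathcal{X}\to\mathcal{Z}\subseteq\mathbb{R}^d$; classifiers $w\in\mathcal{H}_w$ map $\mathcal{Z}\to\mathbb{R}^k$. Invariant pairs: $\mathcal{S}^{\mathsf{IV}}$ is the set of $(\Phi,w)\in\mathcal{H}_\Phi\times\mathcal{H}_w$ such that $R^e(w\circ\Phi)\le R^e(\bar w\circ\Phi)$ for all $\bar w\in\mathcal{H}_w$ and all $e\in\mathcal{E}_{tr}$. $\tilde{\mathcal{S}}^{\mathsf{IV}}$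 is the set of tuples $(\Phi,\{w^q\}_{q\in\mathcal{E}_{tr}},w)$ such that $(\Phi,w)\in\mathcal{S}^{\mathsf{IV}}$, each $w^q\in\mathcal{H}_w$, and $w=\frac{1}{|\mathcal{E}_{tr}|}\sum_{q}w^q$ (pointwise). Ensemble game (EIRM): given $\Phi\in\mathcal{H}_\Phi$, the players are the environments $e\in\mathcal{E}_{tr}$, player $e$ chooses $w^e\in\mathcal{H}_w$, and its utility is $u_e(w^e,w^{-e},\Phi)=-R^e(w^{av}\circ\Phi)$ where $w^{av}=\frac{1}{|\mathcal{E}_{tr}|}\sum_{q\in\mathcal{E}_{tr}}w^q$. A pure Nash equilibrium is a profile $\{w^q\}$ with $u_e(w^e,w^{-e},\Phi)\ge u_e(\bar w^e,w^{-e},\Phi)$ for all $\bar w^e\in\mathcal{H}_w$ and all $e$. $\mathcal{S}^{\mathsf{EIRM}}$ is the set of tuples $(\Phi,\{w^q\}_{q\in\mathcal{E}_{tr}})$ with $\Phi\in\mathcal{H}_\Phi$ and $\{w^q\}$ a pure Nash equilibrium of the game given $\Phi$; $\tilde{\mathcal{S}}^{\mathsf{EIRM}}$ is the set of tuples $(\Phi,\{w^q\},w^{av})$ with $(\Phi,\{w^q\})\in\mathcal{S}^{\mathsf{EIRM}}$ and $w^{av}=\frac{1}{|\mathcal{E}_{tr}|}\sum_q w^q$. *)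

(* Defs.v *)
From HB Require Import structures.
From mathcomp Require Import all_boot all_order all_algebra.
From mathcomp Require Import all_classical all_reals all_analysis.
Set Implicit Arguments. Unset Strict Implicit. Unset Printing Implicit Defensive.
Import Order.TTheory GRing.Theory Num.Theory.
Local Open Scope classical_set_scope.
Local Open Scope ring_scope.

Section IRM.
Context {R : realType} {d : measure_display} {Omega : measurableType d}
  {E : finType} {X Y Z : Type} {k : nat}.

Variables (P : E -> probability Omega R) (Xe : E -> Omega -> X)
  (Ye : E -> Omega -> Y) (loss : 'rV[R]_k -> Y -> R).

Definition risk (e : E) (f : X -> 'rV[R]_k) : \bar R :=
  (\int[P e]_(om in setT) (loss (f (Xe e om)) (Ye e om))%:E)%E.

Definition wavg (ws : E -> Z -> 'rV[R]_k) : Z -> 'rV[R]_k :=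
  fun z => (#|E|%:R)^-1 *: \sum_(q : E) ws q z.

Definition affine_closed (Hw : set (Z -> 'rV[R]_k)) : Prop :=
  (forall w1 w2, Hw w1 -> Hw w2 -> Hw (fun z => w1 z + w2 z)) /\
  (forall (c : R) w, Hw w -> Hw (fun z => c *: w z)).

Variables (HPhi : set (X -> Z)) (Hw : set (Z -> 'rV[R]_k)).

Definition S_IV : set ((X -> Z) * (Z -> 'rV[R]_k)) :=
  [set pw | HPhi pw.1 /\ Hw pw.2 /\
     forall wb, Hw wb -> forall e, (risk e (pw.2 \o pw.1) <= risk e (wb \o pw.1))%E].

Definition S_IV_tilde :
  set ((X -> Z) * (E -> Z -> 'rV[R]_k) * (Z -> 'rV[R]_k)) :=
  [set t | S_IV (t.1.1, t.2) /\ (forall q, Hw (t.1.2 q)) /\ t.2 = wavg t.1.2].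

Definition upd (ws : E -> Z -> 'rV[R]_k) (e : E) (v : Z -> 'rV[R]_k) :=
  fun q => if q == e then v else ws q.

Definition utility (e : E) (ws : E -> Z -> 'rV[R]_k) (Phi : X -> Z) : \bar R :=
  (- risk e (wavg ws \o Phi))%E.

Definition pure_NE (Phi : X -> Z) (ws : E -> Z -> 'rV[R]_k) : Prop :=
  (forall q, Hw (ws q)) /\
  forall e wb, Hw wb -> (utility e (upd ws e wb) Phi <= utility e ws Phi)%E.

Definition S_EIRM : set ((X -> Z) * (E -> Z -> 'rV[R]_k)) :=
  [set p | HPhi p.1 /\ pure_NE p.1 p.2].

Definition S_EIRM_tilde :
  set ((X -> Z) * (E -> Z -> 'rV[R]_k) * (Z -> 'rV[R]_k)) :=
  [set t | S_EIRM (t.1.1, t.1.2) /\ t.2 = wavg t.1.2].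

End IRM.

(* Main.v *)
Require Import Defs.
From mathcomp Require Import all_boot all_order all_algebra.
From mathcomp Require Import all_classical all_reals all_analysis.
Import Order.TTheory GRing.Theory Num.Theory.
Local Open Scope classical_set_scope.
Local Open Scope ring_scope.

Lemma Hw_ext (R : realType) (Z : Type) (k : nat) (Hw : set (Z -> 'rV[R]_k)) f g :
  (forall z, f z = g z) -> Hw f -> Hw g.
Proof. by move=> fg; have -> : f = g by apply: funext. Qed.

Lemma Hw_sum (R : realType) (E : finType) (Z : Type) (k : nat)
  (Hw : set (Z -> 'rV[R]_k)) (ws : E -> Z -> 'rV[R]_k) (e0 : E) :
  affine_closed Hw -> (forall q, Hw (ws q)) ->
  Hw (fun z => \sum_(q : E) ws q z).
Proof.
move=> [Hadd Hsc] Hws.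
have H0 : Hw (fun _ => 0).
  by apply: (@Hw_ext R Z k Hw (fun z => 0 *: ws e0 z)) => [z|]; [rewrite scale0r|apply: Hsc].
rewrite unlock; elim: (index_enum E) => [|a r IH] /=.
  exact: H0.
exact: Hadd.
Qed.

Lemma Hw_wavg (R : realType) (E : finType) (Z : Type) (k : nat)
  (Hw : set (Z -> 'rV[R]_k)) (ws : E -> Z -> 'rV[R]_k) (e0 : E) :
  affine_closed Hw -> (forall q, Hw (ws q)) -> Hw (wavg ws).
Proof.
move=> Hc Hws; rewrite /wavg; apply: Hc.2; exact: (@Hw_sum _ _ _ _ _ _ e0 Hc Hws).
Qed.

Theorem theorem1 (R : realType) (d : measure_display) (Omega : measurableType d)
  (E : finType) (X Y Z : Type) (k : nat)
  (P : E -> probability Omega R) (Xe : E -> Omega -> X) (Ye : E -> Omega -> Y)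
  (loss : 'rV[R]_k -> Y -> R)
  (HPhi : set (X -> Z)) (Hw : set (Z -> 'rV[R]_k)) :
  (0 < #|E|)%N ->
  affine_closed Hw ->
  S_IV_tilde P Xe Ye loss HPhi Hw = S_EIRM_tilde P Xe Ye loss HPhi Hw.
Proof.
move=> hE Hc.
have [e0 _] : exists e0 : E, true.
  by move: hE => /card_gt0P [x _]; exists x.
apply/seteqP; split => -[[Phi ws] w] /=.
- rewrite /S_IV_tilde /S_EIRM_tilde /S_IV /S_EIRM /pure_NE /=.
  move=> [[HP [Hw' Hopt]] [Hws Hweq]]; subst w; split => //; split => //; split => //.
  move=> e wb Hwb; rewrite /utility leeN2. apply: Hopt.
  apply: (@Hw_wavg _ _ _ _ _ _ e0 Hc) => q; rewrite /upd; case: ifP => _ //.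
- rewrite /S_IV_tilde /S_EIRM_tilde /S_IV /S_EIRM /pure_NE /=.
  move=> [[HP [Hws HNE]] ->]; split => //; split => //.
  split; first exact: (@Hw_wavg _ _ _ _ _ _ e0 Hc).
  move=> wb Hwb e.
  pose n : R := #|E|%:R.
  have n0 : n != 0 by rewrite /n pnatr_eq0 -lt0n.
  pose v := fun z => ws e z + (n *: wb z + (- n) *: wavg ws z).
  have Hv : Hw v.
    apply: Hc.1 => //; apply: Hc.1; apply: Hc.2 => //.
    exact: (@Hw_wavg _ _ _ _ _ _ e0 Hc).
  have Hup : wavg (upd ws e v) = wb.
    apply: funext => z; rewrite /wavg.
    rewrite (bigD1 e) //= {1}/upd eqxx.
    rewrite (eq_bigr (fun q => ws q z)); last first.
      by move=> q /negPf qe; rewrite /upd qe.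
    rewrite /v /wavg.
    have -> : \sum_(i | i != e) ws i z = \sum_q ws q z - ws e z.
      by rewrite [in RHS](bigD1 e) //= addrAC subrr add0r.
    rewrite scalerA mulNr mulfV // scaleN1r.
    have H3 : forall a b c : 'rV[R]_k, a + (b - c) + (c - a) = b.
      move=> a b c; rewrite addrC addrA subrK addrCA subrr addr0 //.
    by rewrite H3 scalerA (mulVf n0) scale1r.
  have := HNE e v Hv; rewrite /utility Hup leeN2; done.
Qed.
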